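(* Let $k$ be an algebraically closed field, let $1\le s\le t$ be integers, $R=k[x,y]/(x^s,y^t)$ with its standard grading, and $\theta$ the image of $x+y$ in $R$. Let $\zeta,\eta$ be nonzero homogeneous elements of $R$. If $\sigma(k[\theta]\zeta)\neq\sigma(k[\theta]\eta)$, then $k[\theta]\zeta\cap k[\theta]\eta=\{0\}$; hence $k[\theta]\zeta+k[\theta]\eta=k[\theta]\zeta\oplus k[\theta]\eta$.
   Context: $R=\bigoplus_i R_i$ where $R_i$ is spanned by the images of monomials of degree $i$. For a nonzero homogeneous element $\zeta\in R_m$, the socle degree $\sigma(k[\theta]\zeta)$ of the cyclic $k[\theta]$-module $k[\theta]\zeta$ is the integer $d$ such that the socle of $k[\theta]\zeta$ as a $k[\theta]$-module is contained in $R_d$; equivalently $d=m+e$ where $e$ is the largest integer with $\theta^e\zeta\neq0$. *)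

(* Defs.v *)
From HB Require Import structures.
From mathcomp Require Import all_boot all_order all_algebra.
Set Implicit Arguments. Unset Strict Implicit. Unset Printing Implicit Defensive.
Import GRing.Theory.
Local Open Scope ring_scope.

(* Model of R = k[x,y]/(x^s, y^t): an element is its coordinate matrix in the
   monomial basis x^i y^j (i < s, j < t); entry (i,j) = coefficient of x^i y^j. *)
Definition Ralg (k : fieldType) (s t : nat) := 'M[k]_(s, t).

(* multiplication in R: product of monomials x^i1 y^j1 * x^i2 y^j2 is
   x^(i1+i2) y^(j1+j2), which vanishes unless i1+i2 < s and j1+j2 < t *)
Definition mulR (k : fieldType) (s t : nat) (A B : Ralg k s t) : Ralg k s t :=
  \matrix_(i < s, j < t)
    \sum_(i1 < s) \sum_(j1 < t) \sum_(i2 < s) \sum_(j2 < t)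
      (if ((i1 + i2)%N == i) && ((j1 + j2)%N == j) then A i1 j1 * B i2 j2 else 0).

Definition xR (k : fieldType) (s t : nat) : Ralg k s t :=
  \matrix_(i < s, j < t) ((nat_of_ord i == 1%N) && (nat_of_ord j == 0%N))%:R.
Definition yR (k : fieldType) (s t : nat) : Ralg k s t :=
  \matrix_(i < s, j < t) ((nat_of_ord i == 0%N) && (nat_of_ord j == 1%N))%:R.

Definition thetaR (k : fieldType) (s t : nat) : Ralg k s t := xR k s t + yR k s t.

Definition thpow (k : fieldType) (s t : nat) (e : nat) (z : Ralg k s t) : Ralg k s t :=
  iter e (mulR (thetaR k s t)) z.

Definition homogR (k : fieldType) (s t : nat) (z : Ralg k s t) (m : nat) : Prop :=
  forall (i : 'I_s) (j : 'I_t), (i + j)%N != m -> z i j = 0.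

Definition in_cyc (k : fieldType) (s t : nat) (z w : Ralg k s t) : Prop :=
  exists p : {poly k}, w = \sum_(e < size p) p`_e *: thpow e z.

(* socle degree of k[theta] z for a nonzero homogeneous z in R_m:
   d = m + e where e is the largest integer with theta^e z != 0 *)
Definition socle_deg (k : fieldType) (s t : nat) (z : Ralg k s t) (d : nat) : Prop :=
  exists m e : nat,
    [/\ homogR z m, thpow e z != 0,
        (forall e' : nat, thpow e' z != 0 -> (e' <= e)%N) & d = (m + e)%N].

(* Main.v *)
Require Import Defs.
From mathcomp Require Import all_boot all_order all_algebra.
From mathcomp Require Import zify.
Local Open Scope ring_scope.
Import GRing.Theory.

Section Aux.
Variables (k : fieldType) (s t : nat).
Local Notation R := (Ralg k s t).

Lemma mulRD (A B C : R) : mulR A (B + C) = mulR A B + mulR A C.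
Proof.
apply/matrixP => i j; rewrite !mxE -big_split; apply: eq_bigr => i1 _.
rewrite -big_split; apply: eq_bigr => j1 _.
rewrite -big_split; apply: eq_bigr => i2 _.
rewrite -big_split; apply: eq_bigr => j2 _ /=.
by case: ifP; rewrite ?mxE ?mulrDr ?addr0.
Qed.

Lemma mulRZ (A B : R) (c : k) : mulR A (c *: B) = c *: mulR A B.
Proof.
apply/matrixP => i j; rewrite !mxE big_distrr; apply: eq_bigr => i1 _.
rewrite big_distrr; apply: eq_bigr => j1 _.
rewrite big_distrr; apply: eq_bigr => i2 _.
rewrite big_distrr; apply: eq_bigr => j2 _ /=.
by case: ifP; rewrite ?mxE ?mulr0 // mulrCA.
Qed.

Lemma mulR0 (A : R) : mulR A 0 = 0.
Proof. by have := mulRZ A 0 0; rewrite !scale0r. Qed.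

Lemma thpowD n (A B : R) : thpow n (A + B) = thpow n A + thpow n B.
Proof. by elim: n => //= n IH; rewrite /thpow /= -!/(thpow _ _) IH mulRD. Qed.

Lemma thpowZ n (A : R) c : thpow n (c *: A) = c *: thpow n A.
Proof. by elim: n => //= n IH; rewrite /thpow /= -!/(thpow _ _) IH mulRZ. Qed.

Lemma thpow0 n : thpow n (0 : R) = 0.
Proof. by elim: n => //= n IH; rewrite /thpow /= -!/(thpow _ _) IH mulR0. Qed.

Lemma thpowS n (A : R) : thpow n.+1 A = mulR (thetaR k s t) (thpow n A).
Proof. by []. Qed.

Lemma thpow_comp a b (A : R) : thpow a (thpow b A) = thpow (a + b) A.
Proof. by rewrite /thpow iterD. Qed.

Lemma thpow_sum n N (c : nat -> k) (v : nat -> R) :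
  thpow n (\sum_(e < N) c e *: v e) = \sum_(e < N) c e *: thpow n (v e).
Proof.
elim/big_rec2: _ => [|e y1 y2 _ IH]; first exact: thpow0.
by rewrite thpowD thpowZ IH.
Qed.

Lemma homog_mul (A B : R) a b :
  homogR A a -> homogR B b -> homogR (mulR A B) (a + b).
Proof.
move=> hA hB i j hij; rewrite mxE.
apply: big1 => i1 _; apply: big1 => j1 _; apply: big1 => i2 _; apply: big1 => j2 _.
case: ifP => // /andP[/eqP e1 /eqP e2].
case: (eqVneq (i1 + j1)%N a) => h1; last by rewrite hA // mul0r.
case: (eqVneq (i2 + j2)%N b) => h2; last by rewrite hB // mulr0.
exfalso; move/eqP: hij; rewrite -e1 -e2 -h1 -h2; lia.
Qed.

Lemma homog_theta : homogR (thetaR k s t) 1.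
Proof.
move=> i j h; rewrite !mxE.
have h1 : ((nat_of_ord i == 1%N) && (nat_of_ord j == 0%N)) = false.
  by apply/negbTE/negP => /andP[/eqP a /eqP b]; rewrite a b in h.
have h2 : ((nat_of_ord i == 0%N) && (nat_of_ord j == 1%N)) = false.
  by apply/negbTE/negP => /andP[/eqP a /eqP b]; rewrite a b in h.
by rewrite h1 h2 addr0.
Qed.

Lemma homog_thpow (A : R) m e : homogR A m -> homogR (thpow e A) (m + e).
Proof.
move=> hA; elim: e => [|e IH]; first by rewrite addn0.
by rewrite thpowS addnS -add1n; apply: homog_mul => //; exact: homog_theta.
Qed.

Lemma key (z w : R) E : thpow E z != 0 ->
  (forall e', thpow e' z != 0 -> (e' <= E)%N) -> in_cyc z w -> w != 0 ->
  exists n c, [/\ c != 0, thpow n w = c *: thpow E z & thpow n.+1 w = 0].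
Proof.
move=> hE hmax [p ->] hw.
have hz : forall e, (E < e)%N -> thpow e z = 0.
  move=> e he; apply/eqP; apply: contraTT he; rewrite -leqNgt; exact: hmax.
have pn0 : p != 0.
  by apply/eqP => p0; rewrite p0 size_poly0 big_ord0 eqxx in hw.
have exP : exists a, p`_a != 0.
  by exists (size p).-1; rewrite -lead_coefE lead_coef_eq0.
case: (ex_minnP exP) => a ha amin.
have asz : (a < size p)%N.
  by rewrite ltnNge; apply: contra ha => h; rewrite nth_default.
have aE : (a <= E)%N.
  rewrite leqNgt; apply/negP => aE; move: hw; rewrite big1 ?eqxx // => e _.
  case: (leqP a e) => h.
    by rewrite hz ?scaler0 //; exact: leq_trans aE h.
  have -> : p`_e = 0.
    by apply/eqP; apply: contraTT h; rewrite -leqNgt; exact: amin.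
  by rewrite scale0r.
have main : thpow (E - a) (\sum_(e < size p) p`_e *: thpow e z) = p`_a *: thpow E z.
  rewrite thpow_sum (bigD1 (Ordinal asz)) //= thpow_comp subnK // big1 ?addr0 //.
  move=> e hne; rewrite thpow_comp.
  case: (ltngtP e a) => h.
  - have -> : p`_e = 0.
      by apply/eqP; apply: contraTT h; rewrite -leqNgt; exact: amin.
    by rewrite scale0r.
  - by rewrite hz ?scaler0 //; lia.
  - by exfalso; move: hne; rewrite -val_eqE /= h eqxx.
exists (E - a)%N, p`_a; split => //.
by rewrite thpowS main mulRZ -thpowS hz ?scaler0.
Qed.

End Aux.
Arguments key {k s t z w E}.
Arguments homog_thpow {k s t A m} e.

Theorem lemma2p13 (k : closedFieldType) (s t : nat) (hs : (1 <= s)%N) (hst : (s <= t)%N)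
  (zeta eta : Ralg k s t) (mz me : nat) (dz de : nat) :
  homogR zeta mz -> zeta != 0 -> homogR eta me -> eta != 0 ->
  socle_deg zeta dz -> socle_deg eta de -> dz <> de ->
  forall w : Ralg k s t, in_cyc zeta w -> in_cyc eta w -> w = 0.
Proof.
move=> _ _ _ _ [m1 [E1 [hm1 hE1 hmax1 ->]]] [m2 [E2 [hm2 hE2 hmax2 ->]]] hd w hw1 hw2.
apply/eqP; apply: contraT => hw.
have [n1 [c1 [c1n0 ue1 ue1S]]] := key hE1 hmax1 hw1 hw.
have [n2 [c2 [c2n0 ue2 ue2S]]] := key hE2 hmax2 hw2 hw.
have later : forall a b, (a < b)%N -> thpow a.+1 w = 0 -> thpow b w = 0.
  move=> a b ab h0; rewrite -(subnK ab) -thpow_comp h0; exact: thpow0.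
case: (ltngtP n1 n2) => h.
- move: (later _ _ h ue1S); rewrite ue2 => /eqP; rewrite scaler_eq0.
  by rewrite (negbTE c2n0) (negbTE hE2).
- move: (later _ _ h ue2S); rewrite ue1 => /eqP; rewrite scaler_eq0.
  by rewrite (negbTE c1n0) (negbTE hE1).
rewrite -h in ue2.
set u := thpow n1 w in ue1 ue2.
have hu : u != 0 by rewrite ue1 scaler_eq0 negb_or c1n0.
have : [exists i, [exists j, u i j != 0]].
  apply: contraNT hu => /existsPn H; apply/eqP/matrixP => i j.
  by move/existsPn: (H i) => /(_ j) /negPn/eqP ->; rewrite mxE.
case/existsP => i /existsP [j hij].
have h1 : (i + j)%N = (m1 + E1)%N.
  apply/eqP; apply: contraNT hij => hne.
  by rewrite ue1 mxE (homog_thpow E1 hm1 _ _ hne) mulr0.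
have h2 : (i + j)%N = (m2 + E2)%N.
  apply/eqP; apply: contraNT hij => hne.
  by rewrite ue2 mxE (homog_thpow E2 hm2 _ _ hne) mulr0.
by case: hd; rewrite -h1 -h2.
Qed.
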